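(* Let $(\Theta,p,A,u,v)$ be any persuasion environment and suppose the receiver's updating rule is the geometric distortion $\mu^G_\alpha$ with $\alpha>0$. Then $\mathcal{V}^1(p,\mu^G_\alpha)=\mathcal{V}^2(p,\mu^G_\alpha)$.
   Context: A persuasion environment $(\Theta,p,A,u,v)$: finite state set $\Theta$, full-support prior $p\in\Delta(\Theta)$, finite action set $A$, receiver utility $u(a,\theta)$, sender utility $v(a)$ depending only on the action. $\hat a(q)$ is a sender-optimal selection from $\arg\max_{a}\mathbb{E}_q[u(a,\tilde\theta)]$ and $\hat v(q):=v(\hat a(q))$. The Bayesian sender chooses experiments $\sigma=(\sigma_\theta)_\theta$, $\sigma_\theta\in\Delta(S)$, $S$ a fixed sufficiently large finite signal set. Bayesian updating: $\mu_B(\sigma,p)(\theta\mid s)=\sigma_\theta(s)p(\theta)/\sum_{\theta'}\sigma_{\theta'}(s)p(\theta')$. Geometric distortion: $\mu^G_\alpha(\sigma,p)(\theta\mid s)=\frac{p(\theta)\sigma_\theta(s)^\alpha}{\sum_{\theta'}p(\theta')\sigma_{\theta'}(s)^\alpha}$; it satisfies $\mu^G_\alpha(\sigma,p)(\cdot\mid s)=D_p(\mu_B(\sigma,p)(\cdot\mid s))$ with $D_p(q)(\theta)=\frac{p(\theta)^{1-\alpha}q(\theta)^\alpha}{\sum_{\theta'}p(\theta')^{1-\alpha}q(\theta')^\alpha}$. One-shot: $\mathcal{R}(p)$ is the set of distributions $\rho$ over $\Delta(\Theta)$ with $\mathbb{E}_\rho[\tilde q]=p$; $\check v(q):=\hat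 v(D_p(q))$; $\mathcal{V}^1(p,\mu):=\{\mathbb{E}_\rho[\check v(\tilde q)]:\rho\in\mathcal{R}(p)\}$. Two-step: after a first experiment the sender's belief is the Bayesian posterior $q$ and the receiver's is $D_p(q)$; after a second experiment the sender's Bayesian posterior (from $q$) is $r$ and the receiver's belief is $D^{II}_q(r):=D_{D_p(q)}\!\left(\frac{r\cdot(D_p(q)/q)}{\sum_{\theta'}r(\theta')D_p(q)(\theta')/q(\theta')}\right)$ (componentwise). Let $\check v^q(r):=\hat v(D^{II}_q(r))$ and $\mathcal{V}^2(p,\mu):=\{\mathbb{E}_{\rho_1}[\mathbb{E}_{\rho_2(\tilde q)}[\check v^{\tilde q}(\tilde r)]]:\rho_1\in\mathcal{R}(p),\ \rho_2(q)\in\mathcal{R}(q)\ \forall q\in\operatorname{supp}\rho_1\}$. *)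

(* Defs.v *)
From HB Require Import structures.
From mathcomp Require Import all_boot all_order all_algebra.
From mathcomp Require Import classical_sets reals exp.
Set Implicit Arguments. Unset Strict Implicit. Unset Printing Implicit Defensive.
Import Order.TTheory GRing.Theory Num.Theory.
Local Open Scope ring_scope.
Local Open Scope classical_set_scope.

Section Persuasion.
Variables (R : realType) (Theta A : finType).

Definition belief := {ffun Theta -> R}.
Definition is_belief (q : belief) : Prop :=
  (forall t, 0 <= q t) /\ \sum_t q t = 1.

Definition EU (u : A -> Theta -> R) (q : belief) (a : A) : R :=
  \sum_t q t * u a t.
Definition receiver_opt (u : A -> Theta -> R) (q : belief) (a : A) : Prop :=
  forall b, EU u q b <= EU u q a.
Definition sender_opt_selection (u : A -> Theta -> R) (v : A -> R)
    (ahat : belief -> A) : Prop :=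
  forall q, is_belief q ->
    receiver_opt u q (ahat q) /\
    (forall b, receiver_opt u q b -> v b <= v (ahat q)).

Definition Dmap (alpha : R) (p q : belief) : belief :=
  [ffun t => (p t `^ (1 - alpha) * q t `^ alpha) /
             \sum_t' (p t' `^ (1 - alpha) * q t' `^ alpha)].

Definition DII (alpha : R) (p q r : belief) : belief :=
  let dq := Dmap alpha p q in
  let w : belief := [ffun t => r t * (dq t / q t)] in
  Dmap alpha dq [ffun t => w t / \sum_t' w t'].

(* finite-support distributions over Delta(Theta), as lists of
   (positive weight, belief); the support is the listed beliefs *)
Definition splitting (q : belief) (rho : seq (R * belief)) : Prop :=
  (forall x, x \in rho -> 0 < x.1 /\ is_belief x.2) /\
  \sum_(x <- rho) x.1 = 1 /\
  (forall t, \sum_(x <- rho) x.1 * x.2 t = q t).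

Definition expect (rho : seq (R * belief)) (f : belief -> R) : R :=
  \sum_(x <- rho) x.1 * f x.2.

Definition V1 (u : A -> Theta -> R) (v : A -> R) (ahat : belief -> A)
    (alpha : R) (p : belief) : set R :=
  [set y | exists rho, splitting p rho /\
                       y = expect rho (fun q => v (ahat (Dmap alpha p q)))].

Definition V2 (u : A -> Theta -> R) (v : A -> R) (ahat : belief -> A)
    (alpha : R) (p : belief) : set R :=
  [set y | exists rho1 (rho2 : belief -> seq (R * belief)),
     splitting p rho1 /\
     (forall x, x \in rho1 -> splitting x.2 (rho2 x.2)) /\
     y = expect rho1 (fun q =>
           expect (rho2 q) (fun r => v (ahat (DII alpha p q r))))].

End Persuasion.

(* Main.v *)
Require Import Defs.
From HB Require Import structures.
From mathcomp Require Import all_boot all_order all_algebra.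
From mathcomp Require Import classical_sets reals sequences exp.
From mathcomp Require Import ring lra.
Import Order.TTheory GRing.Theory Num.Theory.
Local Open Scope ring_scope.

Section Aux.
Variables (R : realType) (Theta : finType).

Lemma powRE (x b : R) : 0 < x -> x `^ b = expR (b * ln x).
Proof. by move=> x0; rewrite /powR gt_eqF. Qed.

Lemma sum_gt0 (F : Theta -> R) t0 : (forall t, 0 <= F t) -> 0 < F t0 ->
  0 < \sum_t F t.
Proof.
move=> H0 H1; rewrite (bigD1 t0) //=.
have : 0 <= \sum_(i | i != t0) F i by apply: sumr_ge0.
lra.
Qed.

Lemma norm_prop (g g2 : Theta -> R) c t : 0 < c -> (forall t, g2 t = c * g t) ->
  \sum_t g t != 0 -> g2 t / \sum_t g2 t = g t / \sum_t g t.
Proof.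
move=> c0 H s0; rewrite H (eq_bigr (fun t => c * g t)); last by move=> i _; rewrite H.
rewrite -mulr_sumr; field; rewrite s0 ?andbT /=; exact: lt0r_neq0.
Qed.

Lemma DII_D (alpha : R) (p q r : belief R Theta) :
  (forall t, 0 < p t) -> 0 < alpha -> (forall t, 0 <= q t) -> is_belief r ->
  (forall t, q t = 0 -> r t = 0) ->
  DII alpha p q r = Dmap alpha p r.
Proof.
move=> pp a0 q0 [r0 r1] qr.
have [t0 rt0] : exists t0, 0 < r t0.
  case/boolP: [exists t, 0 < r t] => [/existsP[t Ht]|/existsPn H]; first by exists t.
  have : \sum_t r t = 0.
    apply: big1 => t _; apply/eqP; rewrite eq_le r0 andbT leNgt; exact: H.
  by rewrite r1 => /eqP; rewrite oner_eq0.
have qpos t : 0 < r t -> 0 < q t.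
  move=> rt; rewrite lt0r q0 andbT; apply/eqP => /qr; move: rt; lra.
set S1 := \sum_t (p t `^ (1 - alpha) * q t `^ alpha).
have S1p : 0 < S1.
  apply: (@sum_gt0 _ t0) => [t|]; first by apply: mulr_ge0; apply: powR_ge0.
  by apply: mulr_gt0; apply: powR_gt0 => //; apply: qpos.
rewrite /DII.
set dq := Dmap alpha p q.
have dqE t : dq t = p t `^ (1 - alpha) * q t `^ alpha / S1 by rewrite /dq /Dmap ffunE.
clearbody dq.
have dq0 t : 0 <= dq t by rewrite dqE; apply: divr_ge0; [apply: mulr_ge0; apply: powR_ge0|lra].
have dqp t : 0 < r t -> 0 < dq t.
  by move=> rt; rewrite dqE; apply: divr_gt0 => //; apply: mulr_gt0; apply: powR_gt0 => //; apply: qpos.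
set w : belief R Theta := [ffun t => r t * (dq t / q t)].
have wE t : w t = r t * (dq t / q t) by rewrite /w ffunE.
clearbody w.
set W := \sum_t w t.
have w0 t : 0 <= w t by rewrite wE; apply: mulr_ge0 => //; apply: divr_ge0.
have wp t : 0 < r t -> 0 < w t.
  by move=> rt; rewrite wE; apply: mulr_gt0 => //; apply: divr_gt0; [apply: dqp|apply: qpos].
have Wp : 0 < W by apply: (@sum_gt0 _ t0) => //; exact: wp.
set n : belief R Theta := [ffun t => w t / W].
have nE t : n t = w t / W by rewrite /n ffunE.
clearbody n.
apply/ffunP => t; rewrite /Dmap !ffunE.
apply: (@norm_prop (fun t => p t `^ (1 - alpha) * r t `^ alpha)
   (fun t => dq t `^ (1 - alpha) * n t `^ alpha) (expR (- ln S1 - alpha * ln W))).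
- exact: expR_gt0.
- move=> {}t; rewrite nE.
  have [rt|] := ltrP 0 (r t); last first.
    move=> rle; have rt : r t = 0 by apply/le_anti; rewrite rle r0.
    rewrite wE rt !mul0r powR0 ?mulr0 //; exact: lt0r_neq0.
  have qt := qpos _ rt; have dqt := dqp _ rt; have wt := wp _ rt.
  rewrite !powRE //; last by apply: divr_gt0.
  rewrite ln_div ?posrE //.
  rewrite wE lnM ?posrE //; last by apply: divr_gt0.
  rewrite ln_div ?posrE // dqE ln_div ?posrE //; last by apply: mulr_gt0; apply: powR_gt0.
  rewrite lnM ?posrE //; try by apply: powR_gt0.
  rewrite !powRE // !expRK -!expRD; congr expR; ring.
- apply: lt0r_neq0; apply: (@sum_gt0 _ t0) => [t'|]; first by apply: mulr_ge0; apply: powR_ge0.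
  by apply: mulr_gt0; apply: powR_gt0.
Qed.

Lemma term_le_sum (X : eqType) (s : seq X) (F : X -> R) :
  (forall x, x \in s -> 0 <= F x) -> forall x, x \in s -> F x <= \sum_(z <- s) F z.
Proof.
elim: s => [|a s IH] Hnn x; first by rewrite in_nil.
rewrite inE big_cons => /orP [/eqP -> | xs].
  rewrite lerDl big_seq; apply: sumr_ge0 => i Hi; apply: Hnn; by rewrite inE Hi orbT.
have := Hnn a (mem_head _ _).
have := IH (fun y Hy => Hnn y (mem_behead (s:=a :: s) Hy)) x xs.
lra.
Qed.

Lemma split_zero (q : belief R Theta) rho y t : splitting q rho -> y \in rho ->
  q t = 0 -> y.2 t = 0.
Proof.
move=> [H1 [_ H3]] yin qt.
have nn : forall x, x \in rho -> 0 <= x.1 * x.2 t.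
  by move=> x /H1 [x1 [x2 _]]; apply: mulr_ge0 => //; lra.
have := @term_le_sum _ rho _ nn y yin; rewrite H3 qt => le0.
have : y.1 * y.2 t = 0 by apply/le_anti; rewrite le0 nn.
move/eqP; rewrite mulf_eq0 => /orP [/eqP h|/eqP //].
by have [h1 _] := H1 _ yin; move: h1; rewrite h ltxx.
Qed.
End Aux.

Theorem corollary1 (R : realType) (Theta A : finType)
    (p : belief R Theta) (u : A -> Theta -> R) (v : A -> R)
    (ahat : belief R Theta -> A) (alpha : R) :
  (forall t, 0 < p t) -> \sum_t p t = 1 ->
  sender_opt_selection u v ahat ->
  0 < alpha ->
  V1 u v ahat alpha p = V2 u v ahat alpha p.
Proof.
move=> pp p1 _ a0.
rewrite /V1 /V2; apply/seteqP; split => y.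
- move=> [rho [Hs ->]].
  exists rho, (fun q => [:: (1, q)]); split => //; split.
    move=> x xin; have [_ bx] := Hs.1 x xin.
    split; first by move=> z; rewrite inE => /eqP ->; split => //; exact: ltr01.
    by rewrite big_seq1; split => // t; rewrite big_seq1 mul1r.
  rewrite /expect; apply: eq_big_seq => x xin; congr (_ * _).
  have [_ [bx0 bx1]] := Hs.1 x xin.
  by rewrite big_seq1 mul1r DII_D.
- move=> [rho1 [rho2 [Hs1 [Hs2 ->]]]].
  exists [seq (x.1 * z.1, z.2) | x <- rho1, z <- rho2 x.2]; split; last first.
    rewrite /expect big_allpairs_dep; apply: eq_big_seq => x xin /=.
    rewrite mulr_sumr; apply: eq_big_seq => z zin /=.
    have [_ [bx0 bx1]] := Hs1.1 x xin.
    have [_ bz] := (Hs2 x xin).1 z zin.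
    rewrite DII_D // ?mulrA // => t; exact: split_zero (Hs2 x xin) zin.
  split.
    move=> w /allpairsPdep [x [z [xin zin ->]]] /=.
    have [x1 _] := Hs1.1 x xin; have [z1 bz] := (Hs2 x xin).1 z zin.
    by split => //; apply: mulr_gt0.
  split.
    rewrite big_allpairs_dep /= -Hs1.2.1; apply: eq_big_seq => x xin.
    by rewrite -mulr_sumr (Hs2 x xin).2.1 mulr1.
  move=> t; rewrite big_allpairs_dep /= -(Hs1.2.2 t); apply: eq_big_seq => x xin.
  rewrite -(Hs2 x xin).2.2 mulr_sumr; apply: eq_bigr => z _; by rewrite mulrA.
Qed.
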